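(* Fix $\Sigma\in\mathcal{Q}^+_{m,n}$, indices $h,j\in\mathcal{V}_1$ with $h\ge j$, and numbers $\gamma_{kl}\ge0$ for $k,l\in\mathcal{V}_2$, $k\ge l$. Consider $$\min_{\lambda_{hj}\ge0}\ \sum_{k\ge l}\Big[\max\{\lambda_{hj},\gamma_{kl}\}q_{hk,jl}(\Sigma)-\alpha_{hk,jl}\log\max\{\lambda_{hj},\gamma_{kl}\}\Big]+\varepsilon\lambda_{hj}.$$ Let $\tilde\gamma_1<\tilde\gamma_2<\dots<\tilde\gamma_{\tilde u_2}$ ($\tilde u_2\le m_2(m_2+1)/2$) be the distinct values among $\{\gamma_{kl}:k\ge l\}$ in increasing order, and define $\mathcal{C}_u=\{(k,l):k\ge l,\ \gamma_{kl}\le\tilde\gamma_u\}$, $\mathcal{N}_1=\{\tilde\gamma_u:u=1,\dots,\tilde u_2\}$, $\mathcal{N}_2=\{\tilde\lambda_{hj,u}:u=0,1,\dots,\tilde u_2\}$, where $\tilde\lambda_{hj,0}=0$ and, for $u>0$, $$\tilde\lambda_{hj,u}=\frac{\sum_{(k,l)\in\mathcal{C}_u}\alpha_{hk,jl}}{\sum_{(k,l)\in\mathcal{C}_u}q_{hk,jl}(\Sigma)+\varepsilon}.$$ Then this problem admits a solution and all its points of minimum lie in $\mathcal{M}_1=\mathcal{N}_1\cup\mathcal{N}_2$.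
   Context: Let $m_1,m_2,n\in\mathbb{N}$, $m=m_1m_2$, $\mathcal{V}_1=\{1,\dots,m_1\}$, $\mathcal{V}_2=\{1,\dots,m_2\}$, $\varepsilon>0$. $\mathcal{Q}^+_{m,n}$ is the set of matrix pseudo-polynomials $\Sigma(e^{i\vartheta})=S_0+\frac12\sum_{t=1}^n[S_te^{-it\vartheta}+S_t^Te^{it\vartheta}]$ ($S_0=S_0^T$, $S_t\in\mathbb{R}^{m\times m}$) with $\Sigma(e^{i\vartheta})\succ0$ for all $\vartheta\in[-\pi,\pi]$. For $M\in\mathbb{R}^{m\times m}$, $(M)_{hk,jl}$ is the entry in row $(h-1)m_2+k$ and column $(j-1)m_2+l$. $q_{hk,jl}(\Sigma)=\max_{t=0,\dots,n}\max\{|(S_t)_{hk,jl}|,|(S_t)_{hl,jk}|,|(S_t)_{jl,hk}|,|(S_t)_{jk,hl}|\}$. For $h\ge j$, $k\ge l$: $\alpha_{hk,jl}=n+1$ if $h=j,k=l$; $2n+1$ if $h=j,k>l$ or $h>j,k=l$; $4n+2$ if $h>j,k>l$. The objective is taken to be $+\infty$ if some logarithm has argument $0$. *)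

(* Defs.v *)
From mathcomp Require Import all_boot all_order all_algebra.
From mathcomp Require Import all_classical all_reals all_analysis.
From mathcomp Require Import complex.
Set Implicit Arguments. Unset Strict Implicit. Unset Printing Implicit Defensive.
Import Order.TTheory GRing.Theory Num.Theory.
Local Open Scope ring_scope.
Local Open Scope complex_scope.

Section Defs.
Variable R : realType.

(* 0-based version of the double index hk |-> (h-1) m2 + k : row h*m2+k *)
Lemma idx_proof (m1 m2 : nat) (h : 'I_m1) (k : 'I_m2) : (h * m2 + k < m1 * m2)%N.
Proof.
case: h k => h /= hm [k /= km].
have : (h.+1 * m2 <= m1 * m2)%N by rewrite leq_mul2r hm orbT.
by rewrite mulSn; apply: leq_trans; rewrite addnC ltn_add2r.
Qed.

Definition idx (m1 m2 : nat) (h : 'I_m1) (k : 'I_m2) : 'I_(m1 * m2) :=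
  Ordinal (idx_proof h k).

Definition ent (m1 m2 : nat) (M : 'M[R]_(m1 * m2)) h k j l : R :=
  M (idx h k) (idx j l).

Definition cexp (x : R) : R[i] := cos x +i* sin x.

Definition Sigma_at (m n : nat) (S : nat -> 'M[R]_m) (theta : R) : 'M[R[i]]_m :=
  map_mx (fun x => x%:C) (S 0%N) +
  (1 / 2%:R) *: \sum_(1 <= t < n.+1)
     (cexp (- (t%:R * theta)) *: map_mx (fun x => x%:C) (S t)
      + cexp (t%:R * theta) *: map_mx (fun x => x%:C) (S t)^T).

Definition posdef (m : nat) (M : 'M[R[i]]_m) : Prop :=
  forall z : 'cV[R[i]]_m, z != 0 -> 0 < ((map_mx conjc z)^T *m M *m z) 0 0.

Definition in_Qplus (m n : nat) (S : nat -> 'M[R]_m) : Prop :=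
  (S 0%N)^T = S 0%N /\
  forall theta : R, - pi <= theta <= pi -> posdef (Sigma_at n S theta).

Definition qf (m1 m2 n : nat) (S : nat -> 'M[R]_(m1 * m2)) h k j l : R :=
  \big[Num.max/0]_(t < n.+1)
     Num.max (Num.max `|ent (S t) h k j l| `|ent (S t) h l j k|)
             (Num.max `|ent (S t) j l h k| `|ent (S t) j k h l|).

Definition alpha (m1 m2 n : nat) (h j : 'I_m1) (k l : 'I_m2) : R :=
  if (h == j) && (k == l) then n.+1%:R
  else if (h == j) || (k == l) then (2 * n).+1%:R
  else (4 * n + 2)%:R.

(* the objective, with value +oo when some logarithm has argument 0 *)
Definition obj_term (x q a : R) : \bar R :=
  if x == 0 then +oo%E else (x * q - a * ln x)%:E.

Definition objective (m1 m2 n : nat) (S : nat -> 'M[R]_(m1 * m2))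
  (eps : R) (h j : 'I_m1) (gamma : 'I_m2 -> 'I_m2 -> R) (lam : R) : \bar R :=
  (\sum_(k < m2) \sum_(l < m2 | (l <= k)%N)
      obj_term (Num.max lam (gamma k l)) (qf n S h k j l) (alpha n h j k l)
   + (eps * lam)%:E)%E.

(* lambda-tilde associated with the distinct value g = gamma-tilde_u:
   C_u = {(k,l) : k >= l, gamma_kl <= g} *)
Definition lam_tilde (m1 m2 n : nat) (S : nat -> 'M[R]_(m1 * m2))
  (eps : R) (h j : 'I_m1) (gamma : 'I_m2 -> 'I_m2 -> R) (g : R) : R :=
  (\sum_(k < m2) \sum_(l < m2 | (l <= k)%N && (gamma k l <= g)) alpha n h j k l)
  / (\sum_(k < m2) \sum_(l < m2 | (l <= k)%N && (gamma k l <= g)) qf n S h k j l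
     + eps).

Definition in_M1 (m1 m2 n : nat) (S : nat -> 'M[R]_(m1 * m2))
  (eps : R) (h j : 'I_m1) (gamma : 'I_m2 -> 'I_m2 -> R) (x : R) : Prop :=
  (exists k l : 'I_m2, (l <= k)%N /\ x = gamma k l)
  \/ x = 0
  \/ (exists k l : 'I_m2, (l <= k)%N /\
        x = lam_tilde n S eps h j gamma (gamma k l)).

End Defs.

(* Main.v *)
Require Import Defs.
From mathcomp Require Import all_boot all_order all_algebra.
From mathcomp Require Import all_classical all_reals all_analysis.
From mathcomp Require Import ring lra.
Import Order.TTheory GRing.Theory Num.Theory.
From mathcomp Require Import complex.
Local Open Scope ring_scope.

Set Implicit Arguments. Unset Strict Implicit.
Section GG.
Variable R : realType.

Lemma ln_le_sub1 (x : R) : 0 < x -> ln x <= x - 1.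
Proof.
move=> x0.
have h : x <= expR (x - 1) by have := expR_ge1Dx (x - 1); rewrite subrKC.
rewrite -ler_ln ?posrE ?expR_gt0 // in h.
by rewrite expRK in h.
Qed.

Lemma ln_lt_sub1 (x : R) : 0 < x -> x != 1 -> ln x < x - 1.
Proof.
move=> x0 x1.
have h : x < expR (x - 1).
  have := (@expR_gt1Dx R (x - 1)); rewrite subrKC; apply.
  by rewrite subr_eq0.
rewrite -ltr_ln ?posrE ?expR_gt0 // in h.
by rewrite expRK in h.
Qed.

Definition Gf (A B x : R) := A * x - B * ln x.

Lemma lnsub_lt (x y : R) : 0 < x -> x < y -> x * (ln y - ln x) < y - x.
Proof.
move=> x0 xy.
have y0 : 0 < y by apply: lt_trans xy.
rewrite -ln_div ?posrE //.
have := (@ln_lt_sub1 (y / x)).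
rewrite divr_gt0 // => /(_ isT).
have -> : (y / x != 1) by rewrite gt_eqF // ltr_pdivlMr // mul1r.
move=> /(_ isT) h.
move: h; rewrite -(ltr_pM2l x0); rewrite mulrBr mulr1 mulrCA divff ?gt_eqF // mulr1.
by [].
Qed.

Lemma lnsub_lt' (x y : R) : 0 < x -> x < y -> y - x < y * (ln y - ln x).
Proof.
move=> x0 xy.
have y0 : 0 < y by apply: lt_trans xy.
have := (@ln_lt_sub1 (x / y)).
rewrite divr_gt0 // => /(_ isT).
have -> : (x / y != 1) by rewrite lt_eqF // ltr_pdivrMr // mul1r.
move=> /(_ isT) h.
rewrite ln_div ?posrE // in h.
move: h; rewrite -(ltr_pM2l y0) !mulrBr mulr1 mulrCA divff ?gt_eqF // mulr1 => h.
lra.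
Qed.

Lemma G_inc (A B x y : R) : 0 < A -> 0 <= B -> B / A <= x -> x < y ->
  (0 < x \/ B = 0) -> Gf A B x < Gf A B y.
Proof.
move=> A0 B0 Bx xy [x0|->]; last by rewrite /Gf !mul0r !subr0 ltr_pM2l.
have h := lnsub_lt x0 xy.
have hB : B <= A * x by move: Bx; rewrite ler_pdivrMr // mulrC.
rewrite /Gf.
set t := ln y - ln x in h *.
have -> : A * y - B * ln y = A * x - B * ln x + (A * (y - x) - B * t) by rewrite /t; ring.
rewrite ltrDl subr_gt0.
case: (lerP t 0) => t0.
  apply: (le_lt_trans (y := 0)); first by rewrite mulr_ge0_le0.
  by rewrite mulr_gt0 // subr_gt0.
apply: (le_lt_trans (y := A * x * t)); first by rewrite ler_pM2r.
by rewrite -mulrA ltr_pM2l.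
Qed.

Lemma G_dec (A B x y : R) : 0 < A -> 0 < x -> x < y -> y <= B / A ->
  Gf A B y < Gf A B x.
Proof.
move=> A0 x0 xy yB.
have y0 : 0 < y by apply: lt_trans xy.
have h := lnsub_lt' x0 xy.
have hB : A * y <= B by move: yB; rewrite ler_pdivlMr // mulrC.
rewrite /Gf.
set s := ln y - ln x in h *.
have -> : A * x - B * ln x = A * y - B * ln y + (B * s - A * (y - x)) by rewrite /s; ring.
rewrite ltrDl subr_gt0.
have s0 : 0 < s.
  have : 0 < y * s by apply: lt_trans h; rewrite subr_gt0.
  by rewrite pmulr_rgt0.
apply: (lt_le_trans (y := A * (y * s))); first by rewrite ltr_pM2l.
by rewrite mulrA ler_pM2r.
Qed.

Section Gen.
Variables (I : finType) (P : pred I) (g q a : I -> R) (eps : R).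
Hypotheses (eps_gt0 : 0 < eps) (q_ge0 : forall i, 0 <= q i) (a_gt0 : forall i, 0 < a i)
  (g_ge0 : forall i, P i -> 0 <= g i).

Definition otm (x qq aa : R) : \bar R :=
  if x == 0 then +oo%E else (x * qq - aa * ln x)%:E.

Definition obj (lam : R) : \bar R :=
  (\sum_(i | P i) otm (Num.max lam (g i)) (q i) (a i) + (eps * lam)%:E)%E.

Definition Ff (lam : R) : R :=
  \sum_(i | P i) (Num.max lam (g i) * q i - a i * ln (Num.max lam (g i))) + eps * lam.

Definition Af mu := \sum_(i | P i && (g i <= mu)) q i + eps.
Definition Bf mu := \sum_(i | P i && (g i <= mu)) a i.
Definition Kf mu := \sum_(i | P i && ~~ (g i <= mu)) (g i * q i - a i * ln (g i)).
Definition lamt mu := Bf mu / Af mu.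

Lemma Af_gt0 mu : 0 < Af mu.
Proof. by rewrite /Af ltr_wpDl // sumr_ge0. Qed.

Lemma Bf_ge0 mu : 0 <= Bf mu.
Proof. by rewrite /Bf sumr_ge0 // => i _; apply/ltW. Qed.

Lemma lamt_ge0 mu : 0 <= lamt mu.
Proof. by rewrite /lamt divr_ge0 ?Bf_ge0 // ltW // Af_gt0. Qed.

Lemma obj_fin lam : (forall i, P i -> Num.max lam (g i) != 0) -> obj lam = (Ff lam)%:E.
Proof.
move=> H; rewrite /obj /Ff EFinD -sumEFin; congr (_ + _)%E.
by apply: eq_bigr => i Pi; rewrite /otm (negbTE (H i Pi)).
Qed.

Lemma Ff_dec lam mu : (forall i, P i -> g i <= mu -> g i <= lam) ->
  (forall i, P i -> mu < g i -> lam <= g i) ->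
  Ff lam = Kf mu + Gf (Af mu) (Bf mu) lam.
Proof.
move=> H1 H2; rewrite /Ff (bigID (fun i => g i <= mu)) /=.
rewrite (eq_bigr (fun i => lam * q i - a i * ln lam)); last first.
  by move=> i /andP[Pi gi]; rewrite max_l // H1.
rewrite [X in _ + X + _](eq_bigr (fun i => g i * q i - a i * ln (g i))); last first.
  by move=> i /andP[Pi gi]; rewrite max_r // H2 // ltNge.
rewrite big_split /= sumrN -mulr_sumr -mulr_suml /Gf /Af /Bf /Kf mulrDl; ring.
Qed.
Lemma Bf_gt0 mu i : P i -> g i <= mu -> 0 < Bf mu.
Proof.
move=> Pi gi; rewrite /Bf (bigD1 i) /= ?Pi ?gi //.
by rewrite ltr_pwDl ?a_gt0 // sumr_ge0 // => j _; apply/ltW.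
Qed.

Lemma interval mu : 0 <= mu -> exists L U,
 [/\ 0 <= L, L <= mu, mu < U,
  (forall i, P i -> g i <= mu -> g i <= L) &
  (forall i, P i -> mu < g i -> U <= g i)] /\
  ((L = 0 /\ lamt mu = 0 /\ Bf mu = 0 /\ (forall i, P i -> mu < g i)) \/
    (exists i, [/\ P i, L = g i, lamt mu = lamt (g i) & 0 < lamt mu])) /\
  ((exists i, P i /\ U = g i) \/ lamt mu < U).
Proof.
move=> mu0.
have [L [L0 Lmu HL HLc]] : exists L, [/\ 0 <= L, L <= mu,
  (forall i, P i -> g i <= mu -> g i <= L) &
  ((L = 0 /\ lamt mu = 0 /\ Bf mu = 0 /\ (forall i, P i -> mu < g i)) \/
    (exists i, [/\ P i, L = g i, lamt mu = lamt (g i) & 0 < lamt mu]))].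
  case: (pickP (fun i => P i && (g i <= mu))) => [i0 Hi0 | Hn].
    case: (@arg_maxP _ _ _ i0 (fun i => P i && (g i <= mu)) g Hi0) => iL /andP[PiL giL] Hmax.
    exists (g iL); split => //; first exact: g_ge0.
      by move=> i Pi gi; apply: Hmax; rewrite Pi gi.
    right; exists iL; split => //.
      rewrite /lamt /Af /Bf; congr (_ / (_ + _)); apply: eq_bigl => i /=;
      (case Pi: (P i) => //=; apply/idP/idP => [gi|gi];
       [by apply: Hmax; rewrite Pi gi | by apply: le_trans giL]).
    by rewrite /lamt divr_gt0 ?Af_gt0 // (Bf_gt0 PiL giL).
  have B0 : Bf mu = 0 by rewrite /Bf big_pred0.
  exists 0; split => //.
    by move=> i Pi gi; have := Hn i; rewrite /= Pi gi.
  left; split => //; split; first by rewrite /lamt B0 mul0r.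
  split => // i Pi; have := Hn i; rewrite /= Pi /= => /negbT; by rewrite -ltNge.
have [U [muU HU HUc]] : exists U, [/\ mu < U,
  (forall i, P i -> mu < g i -> U <= g i) &
  ((exists i, P i /\ U = g i) \/ lamt mu < U)].
  case: (pickP (fun i => P i && (mu < g i))) => [i0 Hi0 | Hn].
    case: (@arg_minP _ _ _ i0 (fun i => P i && (mu < g i)) g Hi0) => iU /andP[PiU giU] Hmin.
    exists (g iU); split => //.
      by move=> i Pi gi; apply: Hmin; rewrite Pi gi.
    by left; exists iU.
  exists (Num.max mu (lamt mu) + 1); split.
  - by rewrite ltr_pwDr // le_max lexx.
  - by move=> i Pi gi; have := Hn i; rewrite /= Pi gi.
  - by right; rewrite ltr_pwDr // le_max lexx orbT.
by exists L, U; split.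
Qed.

Definition candM c := (exists i, P i /\ c = g i) \/ c = 0 \/ (exists i, P i /\ c = lamt (g i)).

Lemma candM_ge0 c : candM c -> 0 <= c.
Proof. by case=> [[i [Pi ->]]|[->|[i [Pi ->]]]]; rewrite ?g_ge0 ?lamt_ge0. Qed.

Lemma finpos x : 0 < x -> obj x = (Ff x)%:E.
Proof. by move=> x0; apply: obj_fin => i Pi; rewrite gt_eqF // lt_max x0. Qed.

Lemma dom mu : 0 <= mu -> exists c, candM c /\ (obj c <= obj mu)%E.
Proof.
move=> mu0; case: (eqVneq mu 0) => [->|mun0].
  by exists 0; split; [right; left | exact: lexx].
have mup : 0 < mu by rewrite lt_neqAle eq_sym mun0.
have [L [U [[L0 Lmu muU HL HU] [HLc HUc]]]] := interval mu0.
have Fx : forall x, L <= x -> x <= U -> Ff x = Kf mu + Gf (Af mu) (Bf mu) x.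
  move=> x Lx xU; apply: Ff_dec => i Pi gi.
    exact: le_trans (HL i Pi gi) Lx.
  exact: le_trans xU (HU i Pi gi).
rewrite (finpos mup) (Fx mu Lmu (ltW muU)).
set ls := lamt mu.
have lsE : ls = Bf mu / Af mu by [].
case: (lerP ls mu) => hls.
  case: HLc => [[L0' [ls0 [B0 Hall]]] | [i [Pi Li lsi lspos]]].
    exists 0; split; first by right; left.
    rewrite obj_fin; last first.
      by move=> i Pi; rewrite gt_eqF // lt_max (lt_trans mup (Hall i Pi)) orbT.
    rewrite (Fx 0) ?L0' ?lexx ?(le_trans mu0 (ltW muU)) // lee_fin lerD2l /Gf B0.
    by rewrite !mul0r mulr0 !subr0 mulr_ge0 // ltW // Af_gt0.
  set c := if ls <= L then L else ls.
  have cpos : 0 < c by rewrite /c; case: ifP => // h; apply: lt_le_trans lspos h.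
  have Lc : L <= c by rewrite /c; case: ifP => // /negbT; rewrite -ltNge => /ltW.
  have lsc : ls <= c by rewrite /c; case: ifP.
  have cmu : c <= mu by rewrite /c; case: ifP.
  exists c; split.
    by rewrite /c; case: ifP => _; [left; exists i | right; right; exists i].
  rewrite finpos // Fx // ?(le_trans cmu (ltW muU)) // lee_fin lerD2l.
  case: (eqVneq c mu) => [->//|cmu'].
  apply: ltW; apply: G_inc => //; first exact: Af_gt0.
  - exact: Bf_ge0.
  - by rewrite lt_neqAle cmu' cmu.
  - by left.
case: HLc => [[L0' [ls0 _]] | [i [Pi Li lsi lspos]]].
  by move: hls; rewrite /ls ls0 => /(lt_trans mup); rewrite ltxx.
set c := if ls <= U then ls else U.
have muc : mu < c by rewrite /c; case: ifP.
have cls : c <= ls by rewrite /c; case: ifP => // /negbT; rewrite -ltNge => /ltW.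
have cU : c <= U by rewrite /c; case: ifP.
have cpos : 0 < c by apply: lt_trans muc.
exists c; split.
  rewrite /c; case: ifP => h; first by right; right; exists i.
  case: HUc => [[k [Pk ->]]|hU]; first by left; exists k.
  by move: h; rewrite (ltW hU).
rewrite finpos // Fx // ?(le_trans Lmu (ltW muc)) // lee_fin lerD2l.
by apply: ltW; apply: G_dec => //; exact: Af_gt0.
Qed.

Lemma minM lam : 0 <= lam -> (forall mu, 0 <= mu -> (obj lam <= obj mu)%E) -> candM lam.
Proof.
move=> lam0 Hmin; case: (pselect (candM lam)) => // nC; exfalso.
have lamn0 : lam != 0 by apply/eqP => h; apply: nC; right; left.
have lampos : 0 < lam by rewrite lt_neqAle eq_sym lamn0.
have nG : forall i, P i -> lam != g i by move=> i Pi; apply/eqP => h; apply: nC; left; exists i.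
have nT : forall i, P i -> lam != lamt (g i).
  by move=> i Pi; apply/eqP => h; apply: nC; right; right; exists i.
have [L [U [[L0 Lmu muU HL HU] [HLc HUc]]]] := interval lam0.
have Fx : forall x, L <= x -> x <= U -> Ff x = Kf lam + Gf (Af lam) (Bf lam) x.
  move=> x Lx xU; apply: Ff_dec => i Pi gi.
    exact: le_trans (HL i Pi gi) Lx.
  exact: le_trans xU (HU i Pi gi).
set ls := lamt lam.
have Llam : L < lam.
  case: HLc => [[-> _]|[i [Pi Li _ _]]] //.
  by rewrite Li lt_neqAle eq_sym nG // -Li.
have lsn : ls != lam.
  rewrite /ls; case: HLc => [[_ [-> _]]|[i [Pi _ -> _]]]; first by rewrite eq_sym.
  by rewrite eq_sym nT.
have Hl := Hmin.
case: (ltgtP ls lam) => hls; last by rewrite hls eqxx in lsn.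
  set d := if ls <= L then L else ls.
  have dlam : d < lam by rewrite /d; case: ifP.
  have Ld : L <= d by rewrite /d; case: ifP => // /negbT; rewrite -ltNge => /ltW.
  have lsd : ls <= d by rewrite /d; case: ifP.
  set x := (d + lam) / 2.
  have dx : d < x by rewrite /x; lra.
  have xlam : x < lam by rewrite /x; lra.
  have xpos : 0 < x by apply: le_lt_trans dx; apply: le_trans Ld.
  have := Hmin x (ltW xpos).
  rewrite !finpos // !Fx ?(ltW muU) ?(ltW Llam) ?(le_trans Ld (ltW dx)) ?(le_trans (ltW xlam) (ltW muU)) //.
  rewrite lee_fin lerD2l; apply/negP; rewrite -ltNge.
  apply: G_inc => //; first exact: Af_gt0.
  - exact: Bf_ge0.
  - exact: le_trans (ltW dx).
  - by left.
set d := if ls <= U then ls else U.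
have lamd : lam < d by rewrite /d; case: ifP.
have dls : d <= ls by rewrite /d; case: ifP => // /negbT; rewrite -ltNge => /ltW.
have dU : d <= U by rewrite /d; case: ifP.
set x := (lam + d) / 2.
have lamx : lam < x by rewrite /x; lra.
have xd : x < d by rewrite /x; lra.
have xpos : 0 < x by apply: lt_trans lamx.
have := Hmin x (ltW xpos).
rewrite !finpos // !Fx ?(ltW muU) ?(ltW Llam) ?(le_trans (ltW Llam) (ltW lamx)) ?(le_trans (ltW xd) dU) //.
rewrite lee_fin lerD2l; apply/negP; rewrite -ltNge.
apply: G_dec => //; first exact: Af_gt0.
exact: le_trans (ltW xd) dls.
Qed.

Lemma seq_min (f : R -> \bar R) x s :
  exists2 c, c \in x :: s & forall d, d \in x :: s -> (f c <= f d)%E.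
Proof.
elim: s x => [|y s IH] x.
  by exists x; [rewrite inE | move=> d; rewrite inE => /eqP->; exact: lexx].
have [c cin cmin] := IH y; case: (leP (f x) (f c)) => h.
  exists x; first by rewrite inE eqxx.
  move=> d; rewrite inE => /orP[/eqP->|din]; [exact: lexx | exact: le_trans h (cmin d din)].
exists c; first by rewrite inE cin orbT.
by move=> d; rewrite inE => /orP[/eqP->|din]; [exact: ltW | exact: cmin].
Qed.

Lemma exist_min : exists lam, 0 <= lam /\ forall mu, 0 <= mu -> (obj lam <= obj mu)%E.
Proof.
pose cs := 0 :: [seq g i | i <- enum P] ++ [seq lamt (g i) | i <- enum P].
have csC : forall c, c \in cs -> candM c.
  move=> c; rewrite inE mem_cat; case/orP => [/eqP -> | /orP [] H].
  - by right; left.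
  - by case/seq.mapP: H => i; rewrite mem_enum => Pi ->; left; exists i.
  - by case/seq.mapP: H => i; rewrite mem_enum => Pi ->; right; right; exists i.
have Cin : forall c, candM c -> c \in cs.
  move=> c [[i [Pi ->]]|[->|[i [Pi ->]]]]; rewrite inE mem_cat ?eqxx //.
    by rewrite (map_f (fun i => g i)) ?orbT // mem_enum.
  by rewrite (map_f (fun i => lamt (g i))) ?orbT // mem_enum.
have [c cin cmin] := seq_min obj 0 (behead cs).
exists c; split; first exact: candM_ge0 (csC c cin).
move=> mu mu0; have [c' [cc' le]] := dom mu0.
exact: le_trans (cmin c' (Cin c' cc')) le.
Qed.
End Gen.
End GG.
Unset Implicit Arguments.

Theorem proposition5 (R : realType) (m1 m2 n : nat) (eps : R)
  (S : nat -> 'M[R]_(m1 * m2)) (h j : 'I_m1) (gamma : 'I_m2 -> 'I_m2 -> R) :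
  (0 < m1)%N -> (0 < m2)%N -> (0 < n)%N -> 0 < eps ->
  in_Qplus n S -> (j <= h)%N ->
  (forall k l : 'I_m2, (l <= k)%N -> 0 <= gamma k l) ->
  (exists lam : R, 0 <= lam /\
     forall mu : R, 0 <= mu ->
       (objective n S eps h j gamma lam <= objective n S eps h j gamma mu)%E)
  /\
  (forall lam : R, 0 <= lam ->
     (forall mu : R, 0 <= mu ->
       (objective n S eps h j gamma lam <= objective n S eps h j gamma mu)%E) ->
     in_M1 n S eps h j gamma lam).
Proof.
move=> _ _ _ eps0 _ _ gam0.
pose P := fun p : 'I_m2 * 'I_m2 => (p.2 <= p.1)%N.
pose gg := fun p : 'I_m2 * 'I_m2 => gamma p.1 p.2.
pose qq := fun p : 'I_m2 * 'I_m2 => qf n S h p.1 j p.2.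
pose aa := fun p : 'I_m2 * 'I_m2 => @alpha R _ _ n h j p.1 p.2.
have objE : forall lam, objective n S eps h j gamma lam = obj P gg qq aa eps lam.
  by move=> lam; rewrite /objective /obj pair_big_dep.
have ltE : forall x, lam_tilde n S eps h j gamma x = lamt P gg qq aa eps x.
  by move=> x; rewrite /lam_tilde /lamt /Af /Bf !pair_big_dep.
have q0 : forall p, 0 <= qq p.
  move=> p; rewrite /qq /qf; apply: (big_ind (fun x => 0 <= x)) => //.
  by move=> x y hx _; rewrite le_max hx.
have a0 : forall p, 0 < aa p.
  move=> p; rewrite /aa /alpha; case: ifP => _; first by rewrite ltr0n.
  by case: ifP => _; rewrite ltr0n ?addn2.
have g0 : forall p, P p -> 0 <= gg p by move=> p; apply: gam0.
split.
  have [lam [lam0 H]] := exist_min eps0 q0 a0 g0.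
  by exists lam; split => // mu mu0; rewrite !objE; apply: H.
move=> lam lam0 H.
have := minM eps0 q0 a0 g0 lam0.
have /[swap]/[apply] : forall mu, 0 <= mu -> (obj P gg qq aa eps lam <= obj P gg qq aa eps mu)%E.
  by move=> mu mu0; rewrite -!objE; apply: H.
case=> [[[k l] [Pi ->]]|[->|[[k l] [Pi ->]]]].
- by left; exists k, l.
- by right; left.
- by right; right; exists k, l; rewrite ltE.
Qed.
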